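(* Let $\mathcal{B}$ be a bounding family on $[n]^d$ with associated function $d_{\mathcal{B}}$, and let $\mathcal{D}=\prod_{r=1}^d\mathcal{D}_r$ be a product distribution on $[n]^d$ such that $\mu_{\mathcal{D}_r}(j)=q_r(j)/N$ for positive integer $N$ and nonnegative integers $q_r(j)$. With $\Phi$, $f_{ext}$, $d_{ext}$ as defined in the context, for every $f:[n]^d\to\mathbb{R}$, $$\mathrm{dist}_{\mathcal{D}}(f,\mathcal{P}(d_{\mathcal{B}}))=\mathrm{dist}_{\mathcal{U}}(f_{ext},\mathcal{P}(d_{ext})),$$ where $\mathcal{U}$ is the uniform distribution on $[N]^d$.
   Context: A bounding family is a tuple of $2d$ functions $l_1,u_1,\dots,l_d,u_d:[n-1]\to\mathbb{R}$ with $l_r(y)<u_r(y)$; $d_{\mathcal{B}}(x,y)=\sum_{r:x_r>y_r}\sum_{t=y_r}^{x_r-1}u_r(t)-\sum_{r:x_r<y_r}\sum_{t=x_r}^{y_r-1}l_r(t)$. For a function $\delta$ on pairs of points of a domain $X$, $\mathcal{P}(\delta)$ is the set of $g:X\to\mathbb{R}$ with $g(x)-g(y)\le\delta(x,y)$ for all $x,y\in X$ (so $\mathcal{P}(d_{\mathcal{B}})$ is the set of $f$ with $l_r(x_r)\le f(x+\mathbf{e}_r)-f(x)\le u_r(x_r)$). For $t\in[N]$, $\phi_r(t)$ is the unique $\ell\in[n]$ with $\sum_{j<\ell}q_r(j)<t\le\sum_{j\le\ell}q_r(j)$, and $\Phi:[N]^d\to[n]^d$, $\Phi(x)=(\phi_1(x_1),\dots,\phi_d(x_d))$.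 Define $f_{ext}(x)=f(\Phi(x))$ and $d_{ext}(x,y)=d_{\mathcal{B}}(\Phi(x),\Phi(y))$ for $x,y\in[N]^d$. $\mathrm{dist}_{\mathcal{D}}(f,\mathcal{P})=\inf_{g\in\mathcal{P}}\Pr_{x\sim\mathcal{D}}[f(x)\ne g(x)]$. *)

(* Defs.v *)
From mathcomp Require Import all_boot all_order all_algebra.
From mathcomp Require Import all_classical all_reals.
From mathcomp Require Import ereal.
Set Implicit Arguments. Unset Strict Implicit. Unset Printing Implicit Defensive.
Import Order.TTheory GRing.Theory Num.Theory.
Local Open Scope ring_scope.
Local Open Scope classical_set_scope.

(* Conventions: [n] = {1,...,n} is represented 0-indexed by 'I_n, so a paper
   index i corresponds to i-1.  Points of [n]^d are {ffun 'I_d -> 'I_n}.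
   The bounding functions l_r, u_r : [n-1] -> R are represented by
   l r, u r : nat -> R, where only arguments t < n-1 are relevant
   (paper t+1 <-> our t). *)

Notation grid d n := {ffun 'I_d -> 'I_n}.

Definition dB {R : realType} {d n : nat} (l u : 'I_d -> nat -> R)
  (x y : grid d n) : R :=
  \sum_(r < d | (y r < x r)%N) \sum_(y r <= t < x r) u r t
  - \sum_(r < d | (x r < y r)%N) \sum_(x r <= t < y r) l r t.

Definition Pset {R : realType} {X : finType} (delta : X -> X -> R) : set (X -> R) :=
  [set g | forall x y : X, g x - g y <= delta x y].

Definition prob {R : realType} {X : finType} (mu : X -> R) (A : pred X) : R :=
  \sum_(x | A x) mu x.

(* dist_mu(f, P) = inf_{g in P} Pr_{x ~ mu}[f x <> g x] (in extended reals,
   so that the infimum of the empty set is +oo). *)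
Definition dist {R : realType} {X : finType} (mu : X -> R) (f : X -> R)
  (P : set (X -> R)) : \bar R :=
  ereal_inf [set (prob mu (fun x => f x != g x))%:E | g in P].

Definition muD {R : realType} {d n : nat} (q : 'I_d -> 'I_n -> nat) (N : nat)
  (x : grid d n) : R :=
  \prod_(r < d) ((q r (x r))%:R / N%:R).

Definition muU {R : realType} {d N : nat} (x : grid d N) : R := (N ^ d)%:R^-1.

(* phi_r(t): the unique l in [n] with sum_{j<l} q_r(j) < t <= sum_{j<=l} q_r(j).
   0-indexed: t' = t-1, l' = l-1, the condition reads
   sum_{j<l'} q(j) <= t' < sum_{j<=l'} q(j).  The default x0 is never used
   under the hypotheses of the theorem (the condition has a unique solution). *)
Definition phi {d n N : nat} (x0 : 'I_n) (q : 'I_d -> 'I_n -> nat) (r : 'I_d)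
  (t : 'I_N) : 'I_n :=
  odflt x0 [pick l : 'I_n | (\sum_(j < n | j < l) q r j <= t)%N
                            && (t < \sum_(j < n | j <= l) q r j)%N].

Definition Phi {d n N : nat} (x0 : 'I_n) (q : 'I_d -> 'I_n -> nat)
  (x : grid d N) : grid d n :=
  [ffun r => phi x0 q r (x r)].

Definition f_ext {R : realType} {d n N : nat} (x0 : 'I_n) (q : 'I_d -> 'I_n -> nat)
  (f : grid d n -> R) (x : grid d N) : R := f (Phi x0 q x).

Definition d_ext {R : realType} {d n N : nat} (x0 : 'I_n) (q : 'I_d -> 'I_n -> nat)
  (l u : 'I_d -> nat -> R) (x y : grid d N) : R :=
  dB l u (Phi x0 q x) (Phi x0 q y).

(* Main.v *)
Require Import Defs.
From mathcomp Require Import all_boot all_order all_algebra.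
From mathcomp Require Import all_classical all_reals.
From mathcomp Require Import ereal.
From mathcomp Require Import ring lra zify.
Import Order.TTheory GRing.Theory Num.Theory.
Set Implicit Arguments. Unset Strict Implicit.
Local Open Scope ring_scope.

Definition Qs (n : nat) (qr : 'I_n -> nat) (k : nat) : nat :=
  (\sum_(j < n | (j < k)%N) qr j)%N.

Lemma Qs_mono n (qr : 'I_n -> nat) k k' : (k <= k')%N -> (Qs qr k <= Qs qr k')%N.
Proof.
move=> hk; rewrite /Qs [X in (X <= _)%N]big_mkcond [X in (_ <= X)%N]big_mkcond /=.
apply: leq_sum => i _; case: ifP => // hi; rewrite (leq_trans hi hk) //.
Qed.

Lemma Qs_le n (qr : 'I_n -> nat) k : (Qs qr k <= \sum_(j < n) qr j)%N.
Proof.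
rewrite /Qs [X in (X <= _)%N]big_mkcond /=.
by apply: leq_sum => i _; case: ifP.
Qed.

Lemma Qs_n n (qr : 'I_n -> nat) : Qs qr n = (\sum_(j < n) qr j)%N.
Proof. by rewrite /Qs; apply: eq_bigl => i; rewrite ltn_ord. Qed.

Lemma QsS n (qr : 'I_n -> nat) (j : 'I_n) : Qs qr j.+1 = (Qs qr j + qr j)%N.
Proof.
rewrite /Qs (bigD1 j) //= addnC; congr (_ + _)%N.
apply: eq_bigl => i; rewrite ltnS -val_eqE /=.
by rewrite [(i < j)%N]ltn_neqAle andbC.
Qed.

Lemma Qs_exists n (qr : 'I_n -> nat) t : (t < \sum_(j < n) qr j)%N ->
  exists l : 'I_n, (Qs qr l <= t < Qs qr l.+1)%N.
Proof.
rewrite -Qs_n.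
suff H : forall k, (k <= n)%N -> (t < Qs qr k)%N -> exists l : 'I_n, (Qs qr l <= t < Qs qr l.+1)%N.
  by apply: H.
elim=> [|k IH] hk ht.
  by move: ht; rewrite /Qs big_pred0.
case: (ltnP t (Qs qr k)) => htk.
  by apply: IH => //; apply: ltnW.
by exists (Ordinal hk); rewrite /= htk ht.
Qed.

Lemma Qs_unique n (qr : 'I_n -> nat) t (a b : nat) :
  (Qs qr a <= t < Qs qr a.+1)%N -> (Qs qr b <= t < Qs qr b.+1)%N -> a = b.
Proof.
wlog hab : a b / (a <= b)%N.
  move=> H h1 h2; case: (leqP a b) => h; first by apply: H.
  by symmetry; apply: H => //; apply: ltnW.
move=> /andP[h1 h2] /andP[h3 h4].
move: hab; rewrite leq_eqVlt => /orP[/eqP//|hlt].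
have hm := Qs_mono qr hlt. have := leq_ltn_trans h3 h2. by rewrite ltnNge hm.
Qed.

Lemma phiE d n N (x0 : 'I_n) (q : 'I_d -> 'I_n -> nat)
  (hq : forall r : 'I_d, (\sum_(j < n) q r j)%N = N) r (t : 'I_N) (j : 'I_n) :
  (phi x0 q r t == j) = (Qs (q r) j <= t < Qs (q r) j.+1)%N.
Proof.
have cond : forall l : 'I_n, ((\sum_(j < n | (j < l)%N) q r j <= t)%N
                            && (t < \sum_(j < n | (j <= l)%N) q r j)%N)
      = (Qs (q r) l <= t < Qs (q r) l.+1)%N.
  by move=> l; rewrite /Qs; congr (_ && (t < _)%N); apply: eq_bigl => i; rewrite ltnS.
rewrite /phi; case: pickP => [l hl | hnone] /=.
  rewrite cond in hl.
  apply/eqP/idP => [<- //|hj].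
  by apply: val_inj; apply: (Qs_unique hl hj).
have [l hl] : exists l : 'I_n, (Qs (q r) l <= t < Qs (q r) l.+1)%N.
  by apply: Qs_exists; rewrite hq.
by move: (hnone l); rewrite cond hl.
Qed.

Lemma fiber_count (R : realType) d n N (x0 : 'I_n) (q : 'I_d -> 'I_n -> nat)
  (hq : forall r : 'I_d, (\sum_(j < n) q r j)%N = N) r (j : 'I_n) :
  \sum_(t : 'I_N) ((phi x0 q r t == j)%:R : R) = (q r j)%:R.
Proof.
under eq_bigr => t _ do rewrite phiE //.
set a := Qs (q r) j; set b := Qs (q r) j.+1.
have hab : (a <= b)%N by rewrite /a /b QsS leq_addr.
have hbN : (b <= N)%N by rewrite /b -(hq r) Qs_le.
rewrite -(big_mkord xpredT (fun t => ((a <= t < b)%N%:R : R))).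
rewrite (@big_cat_nat _ _ _ a 0 N) ?(leq_trans hab) //=.
rewrite (@big_cat_nat _ _ _ b a N) //=.
have E1 : \sum_(0 <= i < a) ((a <= i < b)%N%:R : R) = 0.
  rewrite (eq_big_nat _ _ (F2 := fun=> 0)) ?big1 // => i /andP[_ hi].
  by rewrite leqNgt hi.
have E2 : \sum_(b <= i < N) ((a <= i < b)%N%:R : R) = 0.
  rewrite (eq_big_nat _ _ (F2 := fun=> 0)) ?big1 // => i /andP[hi _].
  by rewrite ltnNge hi andbF.
have E3 : \sum_(a <= i < b) ((a <= i < b)%N%:R : R) = (b - a)%:R.
  by rewrite (eq_big_nat _ _ (F2 := fun=> 1)) ?sumr_const_nat // => i ->.
by rewrite E1 E2 E3 add0r addr0 /b QsS addnC addnK.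
Qed.

Lemma Phi_ind (R : realType) d n N (x0 : 'I_n) (q : 'I_d -> 'I_n -> nat)
  (x : grid d N) (y : grid d n) :
  ((Phi x0 q x == y)%:R : R) = \prod_(r < d) ((phi x0 q r (x r) == y r)%:R : R).
Proof.
case: (boolP [forall r, phi x0 q r (x r) == y r]) => [/forallP H | /forallPn [r Hr]].
  have -> : Phi x0 q x = y by apply/ffunP => r; rewrite ffunE; apply/eqP.
  by rewrite eqxx big1 // => r _; rewrite H.
rewrite (bigD1 r) //= (negbTE Hr) mul0r.
have -> : (Phi x0 q x == y) = false.
  by apply/negbTE/eqP => E; move: Hr; rewrite -E ffunE eqxx.
by [].
Qed.

Lemma transfer (R : realType) d n N (x0 : 'I_n) (q : 'I_d -> 'I_n -> nat)
  (hq : forall r : 'I_d, (\sum_(j < n) q r j)%N = N) (F : grid d n -> R) :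
  \sum_(x : grid d N) F (Phi x0 q x)
  = \sum_(y : grid d n) F y * \prod_(r < d) ((q r (y r))%:R : R).
Proof.
transitivity (\sum_(x : grid d N) \sum_(y : grid d n) ((Phi x0 q x == y)%:R * F y)).
  apply: eq_bigr => x _; rewrite (bigD1 (Phi x0 q x)) //= eqxx mul1r big1 ?addr0 //.
  by move=> y hy; rewrite eq_sym (negbTE hy) mul0r.
rewrite exchange_big; apply: eq_bigr => y _; rewrite -big_distrl /= mulrC; congr (_ * _).
under eq_bigr => x _ do rewrite Phi_ind.
rewrite -(bigA_distr_bigA (fun r (j : 'I_N) => ((phi x0 q r j == y r)%:R : R))).
by apply: eq_bigr => r _; apply: fiber_count.
Qed.

Lemma muD_E (R : realType) d n N (q : 'I_d -> 'I_n -> nat) (y : grid d n) :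
  muD q N y = (\prod_(r < d) ((q r (y r))%:R : R)) * ((N ^ d)%:R)^-1 :> R.
Proof.
by rewrite /muD big_split /= prodr_const card_ord natrX exprVn.
Qed.

Lemma prob_transfer (R : realType) d n N (x0 : 'I_n) (q : 'I_d -> 'I_n -> nat)
  (hq : forall r : 'I_d, (\sum_(j < n) q r j)%N = N) (P : pred (grid d n)) :
  prob (@muU R d N) (fun x => P (Phi x0 q x)) = prob (muD q N) P.
Proof.
rewrite /prob big_mkcond [RHS]big_mkcond /=.
transitivity (\sum_(x : grid d N)
   (fun y => if P y then ((N ^ d)%:R)^-1 else 0 : R) (Phi x0 q x)) => //.
rewrite (transfer x0 hq (fun y => if P y then ((N ^ d)%:R)^-1 else 0 : R)); apply: eq_bigr => y _ /=.
by case: (P y); rewrite ?mul0r // muD_E mulrC.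
Qed.

Definition Us (R : realType) (g : nat -> R) (a : nat) : R := \sum_(0 <= t < a) g t.

Definition Dr (R : realType) d (l u : 'I_d -> nat -> R) r (a b : nat) : R :=
  if (b < a)%N then Us (u r) a - Us (u r) b else Us (l r) a - Us (l r) b.

Lemma Us_seg (R : realType) (g : nat -> R) a b : (a <= b)%N ->
  Us g b - Us g a = \sum_(a <= t < b) g t.
Proof.
by move=> hab; rewrite /Us (@big_cat_nat _ _ _ a 0 b) //= [X in X - _]addrC addrK.
Qed.

Lemma lu_seg (R : realType) d n (l u : 'I_d -> nat -> R)
  (hlu : forall (r : 'I_d) (t : nat), (t < n.-1)%N -> l r t < u r t) r a b :
  (a <= b)%N -> (b < n)%N -> Us (l r) b - Us (l r) a <= Us (u r) b - Us (u r) a.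
Proof.
move=> hab hbn; rewrite !Us_seg //; apply: ler_sum_nat => t /andP[_ ht].
apply/ltW/hlu; lia.
Qed.

Lemma Dr_tri (R : realType) d n (l u : 'I_d -> nat -> R)
  (hlu : forall (r : 'I_d) (t : nat), (t < n.-1)%N -> l r t < u r t) r a b c :
  (a < n)%N -> (b < n)%N -> (c < n)%N ->
  Dr l u r a c <= Dr l u r a b + Dr l u r b c.
Proof.
have geU : forall a b, (a < n)%N -> (b < n)%N ->
    Us (u r) a - Us (u r) b <= Dr l u r a b.
  move=> a' b' ha hb; rewrite /Dr; case: ifP => h //.
  have := lu_seg hlu r (a := a') (b := b'); rewrite leqNgt h => /(_ isT hb); lra.
have geL : forall a b, (a < n)%N -> (b < n)%N ->
    Us (l r) a - Us (l r) b <= Dr l u r a b.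
  move=> a' b' ha hb; rewrite /Dr; case: ifP => h //.
  have := lu_seg hlu r (a := b') (b := a') (ltnW h) ha; lra.
move=> ha hb hc.
have h1 := geU _ _ ha hb; have h2 := geU _ _ hb hc.
have h3 := geL _ _ ha hb; have h4 := geL _ _ hb hc.
rewrite [X in X <= _]/Dr; case: ifP => _; lra.
Qed.

Lemma dB_sum (R : realType) d n (l u : 'I_d -> nat -> R) (x y : grid d n) :
  dB l u x y = \sum_(r < d) Dr l u r (x r) (y r).
Proof.
rewrite /dB [X in X - _]big_mkcond [X in _ - X]big_mkcond -sumrB.
apply: eq_bigr => r _ /=; rewrite /Dr.
case: (ltngtP (x r) (y r)) => h.
- by rewrite -(Us_seg _ (ltnW h)) sub0r opprB.
- by rewrite -(Us_seg _ (ltnW h)) subr0.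
- by rewrite h !subrr.
Qed.

Lemma dB_tri (R : realType) d n (l u : 'I_d -> nat -> R)
  (hlu : forall (r : 'I_d) (t : nat), (t < n.-1)%N -> l r t < u r t)
  (x y z : grid d n) : dB l u x z <= dB l u x y + dB l u y z.
Proof.
rewrite !dB_sum -big_split /=; apply: ler_sum => r _; apply: (Dr_tri hlu); apply: ltn_ord.
Qed.

Lemma dB_refl (R : realType) d n (l u : 'I_d -> nat -> R) (x : grid d n) :
  dB l u x x = 0.
Proof. by rewrite dB_sum big1 // => r _; rewrite /Dr ltnn subrr. Qed.

Theorem theorem3p8 (R : realType) (d n N : nat) (hn : (0 < n)%N)
  (l u : 'I_d -> nat -> R)
  (hlu : forall (r : 'I_d) (t : nat), (t < n.-1)%N -> l r t < u r t)
  (q : 'I_d -> 'I_n -> nat)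
  (hN : (0 < N)%N)
  (hq : forall r : 'I_d, (\sum_(j < n) q r j)%N = N)
  (f : grid d n -> R) :
  dist (muD q N) f (Pset (dB l u))
  = dist (@muU R d N) (f_ext (Ordinal hn) q f) (Pset (d_ext (Ordinal hn) q l u)).
Proof.
set x0 := Ordinal hn.
rewrite /dist; congr ereal_inf; apply/seteqP; split.
  move=> _ [g Pg <-]; exists (fun x => g (Phi x0 q x)).
    by move=> x y; apply: Pg.
  by rewrite /f_ext (@prob_transfer R d n N x0 q hq (fun y => f y != g y)).
move=> _ [h Ph <-].
pose x1 : grid d N := [ffun _ => Ordinal hN].
pose G x := \big[Order.min/h x1 + dB l u x (Phi x0 q x1)]_(x' : grid d N)
              (h x' + dB l u x (Phi x0 q x')).
have lb : forall x c, (forall x', c <= h x' + dB l u x (Phi x0 q x')) -> c <= G x.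
  move=> x c H; rewrite /G; apply: (big_ind (fun v => c <= v)) => //.
  by move=> a b ha hb; rewrite le_min ha hb.
have ub : forall x x', G x <= h x' + dB l u x (Phi x0 q x').
  by move=> x x'; rewrite /G (bigD1 x') //= ge_min lexx.
have hG : forall y, G (Phi x0 q y) = h y.
  move=> y; apply/eqP; rewrite eq_le; apply/andP; split.
    by have := ub (Phi x0 q y) y; rewrite dB_refl addr0.
  apply: lb => x'; have := Ph y x'; rewrite /d_ext; lra.
have PG : forall x y, G x - G y <= dB l u x y.
  move=> x y; suff : G x - dB l u x y <= G y by lra.
  apply: lb => x'; have := ub x x'; have := dB_tri hlu x y (Phi x0 q x'); lra.
exists G; first by move=> x y; apply: PG.
rewrite -(@prob_transfer R d n N x0 q hq (fun y => f y != G y)).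
by congr (_%:E); apply: eq_bigl => x /=; rewrite /f_ext hG.
Qed.
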